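(* Let $m$ and $n$ be positive integers with $m$ odd. Then there exists a $\Delta$-permutation $\psi$ of the group $\mathbb{Z}_m\times\mathbb{Z}_{2n}$ such that (1) $\Delta=[(0,0)]\cup[\gamma \mid \gamma\in\mathbb{Z}_m\times\mathbb{Z}_{2n},\ \gamma\neq(0,n)]$ (that is, $\Delta$ contains $(0,0)$ twice and every other element of $\mathbb{Z}_m\times\mathbb{Z}_{2n}$ except $(0,n)$ exactly once), and (2) $\psi$ fixes $(0,0)$ and $\left(-\frac{m-1}{2},\ \left\lfloor\frac{n+1}{2}\right\rfloor+\frac{m-1}{2}n\right)$.
   Context: A list is a multiset; a $v$-list of a group is a multiset of $v$ (not necessarily distinct) elements of the group. Given a group $\Gamma$ (written additively) of order $v$ and a $v$-list $\Delta$ of $\Gamma$, a permutation $\varphi$ of $\Gamma$ is a $\Delta$-permutation if the multiset $[\varphi(a)-a \mid a\in\Gamma]$ equals $\Delta$. *)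

(* Defs.v *)
From HB Require Import structures.
From mathcomp Require Import all_boot all_order fingroup perm all_algebra.
Set Implicit Arguments. Unset Strict Implicit. Unset Printing Implicit Defensive.
Import GRing.Theory.
Local Open Scope ring_scope.

(* A v-list of a finite additive group G is represented by a sequence
   (multisets compared with perm_eq). *)
Definition is_Delta_perm (G : finZmodType) (D : seq G) (phi : {perm G}) : Prop :=
  perm_eq [seq phi a - a | a <- enum G] D.

(* Z_m, realized as 'I_m.-1.+1 (equal to 'I_m when 0 < m), with its Z/mZ
   additive structure (addition mod m). *)
Notation Zmod m := 'I_(m.-1.+1).

Definition Zmn (m n : nat) : Type := (Zmod m * Zmod (2 * n))%type.
HB.instance Definition _ (m n : nat) :=
  Finite.copy (Zmn m n) (Zmod m * Zmod (2 * n))%type.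
HB.instance Definition _ (m n : nat) :=
  GRing.Zmodule.copy (Zmn m n) (Zmod m * Zmod (2 * n))%type.

Check fun m n => is_Delta_perm (G := Zmn m n).

(* Main.v *)
Require Import Defs.
From HB Require Import structures.
From mathcomp Require Import all_boot all_order fingroup perm all_algebra.
From mathcomp Require Import zify.
Import GRing.Theory.
Set Implicit Arguments. Unset Strict Implicit. Unset Printing Implicit Defensive.




Definition SS (N : nat) := (N.+1 %/ 2) * 2.
Definition ff (N X : nat) :=
  if X == 0 then 0 else if X < SS N then SS N - X else SS N + 2 * N - 1 - X.

Lemma SS_bounds N : N <= SS N <= N.+1.
Proof.
rewrite /SS; have := divn_eq N.+1 2; have := ltn_pmod N.+1 (isT : 0 < 2).
lia.
Qed.

Lemma SS_even N : ~~ odd (SS N).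
Proof. by rewrite /SS oddM andbF. Qed.

Lemma mod_odd a b n : a = b %[mod 2 * n] -> odd a = odd b.
Proof.
move=> H; suff E : a %% 2 = b %% 2 by move: (congr1 odd E); rewrite !modn2 !oddb.
rewrite -(modn_dvdm a (dvdn_mulr n (dvdnn 2))).
by rewrite -(modn_dvdm b (dvdn_mulr n (dvdnn 2))) H.
Qed.

Lemma mod_half a b n : 2 * a = 2 * b %[mod 2 * n] -> a = b %[mod n].
Proof. by rewrite -!muln_modr => /eqP; rewrite eqn_pmul2l // => /eqP. Qed.

Lemma mod_cop a b m : odd m -> 2 * a = 2 * b %[mod m] -> a = b %[mod m].
Proof.
move=> om H.
have Em : m = (m %/ 2) * 2 + 1 by rewrite {1}(divn_eq m 2) modn2 om.
have Ka : (m %/ 2).+1 * (2 * a) = m * a + a by rewrite {2}Em; lia.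
have Kb : (m %/ 2).+1 * (2 * b) = m * b + b by rewrite {2}Em; lia.
rewrite -(modnMDl a a m) -(modnMDl b b m) (mulnC a) (mulnC b) -Ka -Kb.
by rewrite -modnMmr H modnMmr.
Qed.





Definition AA (N X : nat) := if X < SS N then SS N else SS N + 2 * N - 1.

Lemma ffA N X : 0 < N -> 0 < X < 2 * N -> ff N X + X = AA N X.
Proof.
move=> hN /andP[h1 h2]; have := SS_bounds N; rewrite /ff /AA.
case: eqP => [E|_]; first lia.
case: ltnP => h3 /andP[h4 h5]; lia.
Qed.

Lemma AA_odd N X : 0 < N -> odd (AA N X) = ~~ (X < SS N).
Proof.
move=> hN; rewrite /AA; case: ltnP => _; first by rewrite (negbTE (SS_even N)).
have -> : SS N + 2 * N - 1 = (SS N + 2 * N.-1).+1 by have := SS_bounds N; lia.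
rewrite /= oddD oddM /=; have := SS_even N; by case: (odd (SS N)).
Qed.

Lemma win0 a b m : a %% m = b %% m -> a < m -> b < m -> a = b.
Proof. by move=> H ha hb; rewrite -(modn_small ha) -(modn_small hb). Qed.

Lemma win1 a b m : a %% m = b %% m -> m <= a < m + m -> m <= b < m + m -> a = b.
Proof.
move=> H /andP[ha1 ha2] /andP[hb1 hb2].
have Ea : a = m + (a - m) by lia.
have Eb : b = m + (b - m) by lia.
move: H; rewrite Ea Eb !modnDl !modn_small; lia.
Qed.

Lemma core_inj m n X Y : 0 < m -> odd m -> 0 < n ->
  0 < X < 2 * (m * n) -> 0 < Y < 2 * (m * n) ->
  ff (m * n) X + Y = ff (m * n) Y + X %[mod 2 * n] ->
  ff (m * n) X %/ n + Y %/ n = ff (m * n) Y %/ n + X %/ n %[mod m] -> X = Y.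
Proof.
move=> hm om hn hX hY H2 H1.
set N := m * n in hX hY H2 H1.
have hN : 0 < N by rewrite muln_gt0 hm.
have E1 := ffA hN hX; have E2 := ffA hN hY.
set Y1 := ff N X in E1 H2 H1; set Y2 := ff N Y in E2 H2 H1.
have hSS := SS_bounds N; have eSS := SS_even N.
have hreg : (X < SS N) = (Y < SS N).
  have o1 : odd Y1 = odd (AA N X) (+) odd X by rewrite -E1 oddD addbK.
  have o2 : odd Y2 = odd (AA N Y) (+) odd Y by rewrite -E2 oddD addbK.
  have : odd (AA N X) = odd (AA N Y).
    move: (mod_odd H2); rewrite !oddD o1 o2.
    by case: (odd X); case: (odd Y); case: (odd (AA N X)); case: (odd (AA N Y)).
  by rewrite !AA_odd // => /negb_inj.
have eA : AA N X = AA N Y by rewrite /AA hreg.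
have hXSS : (X < SS N) = (X < SS N) by [].
set A := AA N X in E1 eA; rewrite -eA in E2.
clearbody Y1 Y2 A.
have Hr : X = Y %[mod n].
  apply: mod_half; apply/eqP; rewrite -(eqn_modDl A).
  have -> : A + 2 * X = Y2 + X + (X + Y) by clear -E2; lia.
  have -> : A + 2 * Y = Y1 + Y + (X + Y) by clear -E1; lia.
  by rewrite eq_sym -modnDml H2 modnDml.
have Hr1 : Y1 = Y2 %[mod n].
  apply/eqP; rewrite -(eqn_modDr X); apply/eqP.
  by rewrite E1 -[in RHS]modnDmr Hr modnDmr E2.
have Hq : Y1 %/ n + X %/ n = Y2 %/ n + Y %/ n.
  apply/eqP; rewrite -(eqn_pmul2r hn) !mulnDl; apply/eqP.
  have dX := divn_eq X n; have dY := divn_eq Y n.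
  have d1 := divn_eq Y1 n; have d2 := divn_eq Y2 n.
  move: dX dY d1 d2; rewrite Hr Hr1.
  move: (X %/ n) (Y %/ n) (Y1 %/ n) (Y2 %/ n) (Y %% n) (Y2 %% n) => a b c d r s.
  clear -E1 E2; lia.
have Hqm : X %/ n = Y %/ n %[mod m].
  apply: mod_cop om _; move: H1 Hq.
  move: (X %/ n) (Y %/ n) (Y1 %/ n) (Y2 %/ n) => a b c d H1 Hq.
  apply/eqP; rewrite -(eqn_modDl (c + a)).
  have -> : c + a + 2 * a = d + a + (a + b) by clear -Hq; lia.
  have -> : c + a + 2 * b = c + b + (a + b) by clear -Hq; lia.
  by apply/eqP; rewrite -modnDml -H1 modnDml.
have dX := divn_eq X n; have dY := divn_eq Y n.
suff Eq : X %/ n = Y %/ n by rewrite dX dY Eq Hr.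
have qXlt : X %/ n < m + m by rewrite ltn_divLR //; rewrite /N in hX; clear -hX; lia.
have qYlt : Y %/ n < m + m by rewrite ltn_divLR //; rewrite /N in hY; clear -hY; lia.
have eN : N = m * n by [].
clearbody N.
have hXr := ltn_pmod X hn; have hYr := ltn_pmod Y hn.
move: (X %/ n) (Y %/ n) (X %% n) (Y %% n) dX dY Hr Hqm qXlt qYlt hXr hYr.
move=> qx qy rx ry dX dY Hr Hqm qXlt qYlt hXr hYr.
clear H1 H2 Hq E1 E2 Hr1.
case: (ltnP X (SS N)) hreg => hX2 hreg.
- have hY2 : Y < SS N by rewrite -hreg.
  have qX : qx <= m by clear -dX hX2 hSS eN hn; nia.
  have qY : qy <= m by clear -dY hY2 hSS eN hn; nia.
  case: (ltngtP qx m) qX => // qX _; case: (ltngtP qy m) qY => // qY _.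
  + exact: win0 Hqm qX qY.
  + move: Hqm; rewrite qY modnn modn_small // => q0.
    rewrite q0 in dX dY; clear -hX hY hX2 hY2 hSS Hr dX dY eN qY qX; nia.
  + move: Hqm; rewrite qX modnn modn_small // => q0.
    rewrite -q0 in dX dY; clear -hX hY hX2 hY2 hSS Hr dX dY eN qY qX; nia.
  + by rewrite qX qY.
- have qX : m <= qx by clear -dX hX2 hSS eN hXr hn; nia.
  have hY2 : SS N <= Y by rewrite leqNgt -hreg.
  have qY : m <= qy by clear -dY hY2 hSS eN hYr hn; nia.
  by apply: win1 Hqm _ _; apply/andP.
Qed.





Lemma SS_eq N : SS N = N + odd N.
Proof.
rewrite /SS; have := divn_eq N.+1 2; rewrite modn2 /=.
case: (odd N) => /=; lia.
Qed.

Lemma mod0_cop q m : odd m -> 2 * q = 0 %[mod m] -> q %% m = 0.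
Proof. by move=> om H; rewrite -(mod0n m); apply: mod_cop om _; rewrite muln0. Qed.

Lemma cong_add_r c a b d : a = b %[mod d] -> a + c = b + c %[mod d].
Proof. by move=> H; rewrite -modnDml H modnDml. Qed.

Lemma core_ni m n X : 0 < m -> odd m -> 0 < n -> 0 < X < 2 * (m * n) ->
  ff (m * n) X = m * n + X %[mod 2 * n] ->
  ff (m * n) X %/ n = m + X %/ n %[mod m] -> False.
Proof.
move=> hm om hn hX H2 H1.
set N := m * n in hX H2 H1.
have hN : 0 < N by rewrite muln_gt0 hm.
have E1 := ffA hN hX.
set Y := ff N X in E1 H2 H1.
have eN : N = m * n by []. clearbody N.
have oA : odd (AA N X) = odd N.
  have : Y + X = N + X + X %[mod 2 * n] by rewrite -modnDml H2 modnDml.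
  rewrite E1 => /mod_odd ->; rewrite !oddD; by case: (odd N); case: (odd X).
have hSS := SS_eq N.
have dX := divn_eq X n.
have HA : AA N X = N + 2 * X %[mod 2 * n].
  rewrite -E1; have -> : N + 2 * X = N + X + X by clear -hN; lia.
  by rewrite -modnDml H2 modnDml.
move: oA; rewrite AA_odd //; case: ltnP => hX2 oA; rewrite /AA ?hX2 in HA E1 *.
-
  have oN : odd N = false by move: oA; case: (odd N).
  rewrite oN addn0 in hSS; rewrite hSS in hX2 E1 HA.
  have r0 : X %% n = 0.
    have : 2 * X = 2 * 0 %[mod 2 * n].
      by apply/eqP; rewrite muln0 -(eqn_modDl N) addn0 eq_sym; apply/eqP.
    by move/mod_half; rewrite mod0n.
  rewrite r0 addn0 in dX.
  have eY : Y = (m - X %/ n) * n by rewrite mulnBl -eN; clear -E1 dX; lia.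
  have hq1 : 0 < X %/ n by clear -dX hX; nia.
  have hq2 : X %/ n < m by clear -dX hX2 eN hn; nia.
  move: H1; rewrite eY mulnK // => H1.
  have H3 := cong_add_r (X %/ n) H1; rewrite subnK in H3; last by clear -hq2; lia.
  have : 2 * (X %/ n) = 0 %[mod m].
    rewrite mod0n -modnDl; have -> : m + 2 * (X %/ n) = m + X %/ n + X %/ n by clear -hq2; lia.
    by rewrite -H3 modnn.
  move/(mod0_cop om); rewrite modn_small //; clear -hq1; lia.
-
  have oN : odd N = true by move: oA; case: (odd N).
  rewrite ltnNge hX2 /= in HA E1.
  rewrite oN in hSS; rewrite hSS in hX2 E1 HA.
  have r0 : X %% n = 0.
    have : 2 * X = 2 * N %[mod 2 * n].
      apply/eqP; rewrite -(eqn_modDl N) eq_sym.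
      have -> : N + 2 * N = N + 1 + 2 * N - 1 by clear -hN; lia.
      by apply/eqP.
    move/mod_half ->; by rewrite eN modnMl.
  rewrite r0 addn0 in dX.
  have eY : Y = (3 * m - X %/ n) * n by rewrite mulnBl -mulnA -eN; clear -E1 dX hSS hX2; lia.
  have hq1 : m < X %/ n by clear -dX hX2 eN hn; nia.
  have hq2 : X %/ n < 2 * m by clear -dX hX eN hn; nia.
  move: H1; rewrite eY mulnK // => H1.
  have H3 := cong_add_r (X %/ n) H1; rewrite subnK in H3; last by clear -hq2; lia.
  have : 2 * (X %/ n) = 0 %[mod m].
    rewrite mod0n -modnDl; have -> : m + 2 * (X %/ n) = m + X %/ n + X %/ n by clear -hq2; lia.
    by rewrite -H3 modnMl.
  move/(mod0_cop om).
  have -> : X %/ n = m + (X %/ n - m) by clear -hq1; lia.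
  rewrite modnDl modn_small; clear -hq1 hq2; lia.
Qed.

Lemma ff_lt N X : 0 < N -> X < 2 * N -> ff N X < 2 * N.
Proof. move=> hN hX; have := SS_bounds N; rewrite /ff; repeat case: ifP; lia. Qed.

Lemma ff_invol N X : 0 < N -> X < 2 * N -> ff N (ff N X) = X.
Proof.
move=> hN hX; have := SS_bounds N; rewrite {2}/ff.
case: (X =P 0) => [->|hx]; first by rewrite /ff eqxx.
case: ltnP => hs hb; rewrite /ff; repeat case: ifP; lia.
Qed.

Lemma ff0 N : ff N 0 = 0.
Proof. by []. Qed.

Lemma ffC N : 0 < N -> ff N (N.+1 %/ 2) = N.+1 %/ 2.
Proof.
move=> hN; have := divn_eq N.+1 2; have := ltn_pmod N.+1 (isT : 0 < 2).
rewrite /ff /SS; repeat case: ifP; lia.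
Qed.

Lemma core_phi m n X Y : 0 < m -> odd m -> 0 < n -> X < 2 * (m * n) -> Y < 2 * (m * n) ->
  X = Y %[mod 2 * n] -> X %/ n = Y %/ n %[mod m] -> X = Y.
Proof.
move=> hm om hn hX hY H2 H1.
have r : X %% n = Y %% n.
  by rewrite -(modn_dvdm X (dvdn_mull 2 (dvdnn n))) H2 modn_dvdm // dvdn_mull.
have q2 : X %/ n %% 2 = Y %/ n %% 2 by rewrite !modn_divl H2.
have hx : X %/ n < m * 2 by rewrite ltn_divLR //; clear -hX; lia.
have hy : Y %/ n < m * 2 by rewrite ltn_divLR //; clear -hY; lia.
have q : X %/ n = Y %/ n.
  rewrite -(modn_small hx) -(modn_small hy); apply/eqP.
  have co : coprime m 2 by rewrite coprimen2.
  by rewrite (chinese_remainder co) H1 q2 !eqxx.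
by rewrite (divn_eq X n) (divn_eq Y n) q r.
Qed.

Local Open Scope ring_scope.

Lemma inZpD p a b : inZp (a + b)%N = inZp a + inZp b :> 'I_p.+1.
Proof. by apply: val_inj; rewrite /= modnDm. Qed.

Lemma inZp_eq p a b : (inZp a = inZp b :> 'I_p.+1) <-> (a = b %[mod p.+1])%N.
Proof. by split => [/(congr1 val)//|H]; apply: val_inj. Qed.

Lemma subr_eq_add (V : zmodType) (x y z w : V) : x - y = z - w <-> x + w = z + y.
Proof.
split=> H.
  have -> : x = z - w + y by rewrite -H subrK.
  by rewrite addrAC subrK.
have -> : x = z + y - w by rewrite -H addrK.
by rewrite addrAC addrK.
Qed.

Lemma Zp_subE p a b c d :
  inZp a - inZp b = inZp c - inZp d :> 'I_p.+1 <-> (a + d = c + b %[mod p.+1])%N.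
Proof. by rewrite subr_eq_add -!inZpD inZp_eq. Qed.

Lemma oppsub (V : zmodType) (x y z w : V) : -x - -y = -z - -w <-> x - y = z - w.
Proof. by rewrite -!opprD; split => [/oppr_inj|->]. Qed.

Definition Phi (m n X : nat) : Zmn m n :=
  ((if (1 < n)%N then - inZp (X %/ n) else inZp (X %/ n)), inZp X).

Lemma Phi_sub m n a b c d : (0 < m)%N -> (0 < n)%N ->
  Phi m n a - Phi m n b = Phi m n c - Phi m n d <->
  ((a + d = c + b %[mod 2 * n]) /\ (a %/ n + d %/ n = c %/ n + b %/ n %[mod m]))%N.
Proof.
move=> hm hn.
have n2 : (0 < 2 * n)%N by rewrite muln_gt0.
have E1 : forall x y z w : Zmod m,
    ((if (1 < n)%N then - x else x) - (if (1 < n)%N then - y else y) =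
     (if (1 < n)%N then - z else z) - (if (1 < n)%N then - w else w)) <-> x - y = z - w.
  by move=> x y z w; case: ifP => _ //; apply: oppsub.
split.
  move=> H; have H1 := congr1 fst H; have H2 := congr1 snd H; simpl in H1, H2.
  move/E1/Zp_subE: H1; rewrite prednK // => H1.
  by move/Zp_subE: H2; rewrite prednK.
case=> H2 H1; apply/eqP; rewrite xpair_eqE; apply/andP; split; apply/eqP; simpl.
  by apply/E1/Zp_subE; rewrite prednK.
by apply/Zp_subE; rewrite prednK.
Qed.

Lemma inZp0 p : inZp 0 = 0 :> 'I_p.+1.
Proof. by apply: val_inj; rewrite /= mod0n. Qed.

Lemma Phi0 m n : Phi m n 0 = 0.
Proof. by rewrite /Phi div0n !inZp0; case: ifP => _; rewrite ?oppr0. Qed.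

Lemma Phi_iota m n : (0 < m)%N -> odd m -> (0 < n)%N ->
  Phi m n (m * n) - Phi m n 0 = ((0 : Zmod m), (inZp n : Zmod (2 * n))).
Proof.
move=> hm om hn; rewrite Phi0 subr0 /Phi mulnK //.
have e1 : inZp m = 0 :> Zmod m by apply: val_inj; rewrite /= prednK // modnn.
have e2 : inZp (m * n) = inZp n :> Zmod (2 * n).
  apply/inZp_eq; rewrite prednK ?muln_gt0 //.
  have -> : (m * n = (m %/ 2) * (2 * n) + n)%N.
    by rewrite {1}(divn_eq m 2) modn2 om mulnDl mul1n mulnA.
  by rewrite modnMDl.
by rewrite e1 e2; case: ifP => _; rewrite ?oppr0.
Qed.

Lemma Phi_inj m n X Y : (0 < m)%N -> odd m -> (0 < n)%N ->
  (X < 2 * (m * n))%N -> (Y < 2 * (m * n))%N -> Phi m n X = Phi m n Y -> X = Y.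
Proof.
move=> hm om hn hX hY E.
have : Phi m n X - Phi m n 0 = Phi m n Y - Phi m n 0 by rewrite E.
case/Phi_sub => // H2 H1; rewrite !addn0 div0n !addn0 in H2 H1.
exact: core_phi hm om hn hX hY H2 H1.
Qed.

Lemma Phi_c m n : (0 < m)%N -> odd m -> (0 < n)%N ->
  Phi m n ((m * n).+1 %/ 2) =
  (- (inZp ((m - 1) %/ 2) : Zmod m),
   (inZp ((n + 1) %/ 2 + (m - 1) %/ 2 * n) : Zmod (2 * n))).
Proof.
move=> hm om hn.
have em : m = ((m - 1) %/ 2 * 2).+1.
  have := modn2 m; rewrite om /= => h2; clear -h2 hm; lia.
set k := ((m - 1) %/ 2)%N in em *.
rewrite /Phi; case: ltnP => hn2.
- have e : ((m * n).+1 %/ 2 = k * n + (n + 1) %/ 2)%N.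
    rewrite {1}em; have -> : (((k * 2).+1 * n).+1 = k * n * 2 + (n + 1))%N by clear; lia.
    by rewrite divnMDl.
  have hc : ((n + 1) %/ 2 < n)%N by rewrite ltn_divLR //; clear -hn2; lia.
  by rewrite e divnMDl // divn_small // addn0 addnC.
- have n1 : n = 1%N by clear -hn hn2; lia.
  subst n.
  have eC : ((m * 1).+1 %/ 2 = k.+1)%N by rewrite muln1 {1}em; clear; lia.
  rewrite eC divn1.
  congr pair; last by congr inZp; clear; lia.
  apply/eqP; rewrite -addr_eq0 -inZpD; apply/eqP; apply: val_inj.
  rewrite /= prednK //; have -> : (k.+1 + k = m)%N by move: em; clear; lia.
  by rewrite modnn.
Qed.

Unset Implicit Arguments.

Theorem mainTheorem2 (m n : nat) :
  (0 < m)%N -> odd m -> (0 < n)%N ->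
  exists psi : {perm Zmn m n},
    is_Delta_perm
      ((0 : Zmn m n) :: [seq g <- enum (Zmn m n : finType) | g != ((0 : Zmod m), (inZp n : Zmod (2 * n)))])
      psi
    /\ psi 0 = 0
    /\ (let c : Zmn m n :=
          (- (inZp ((m - 1) %/ 2) : Zmod m),
           (inZp ((n + 1) %/ 2 + (m - 1) %/ 2 * n) : Zmod (2 * n))) in
        psi c = c).
Proof.
move=> hm om hn.
have hN : (0 < m * n)%N by rewrite muln_gt0 hm.
have h2N : (0 < 2 * (m * n))%N by rewrite muln_gt0.
pose T := 'I_(2 * (m * n)).
have ffl : forall X : T, (ff (m * n) X < 2 * (m * n))%N := fun X => ff_lt hN (ltn_ord X).
pose fo := fun X : T => (Ordinal (ffl X) : T).
have foK : cancel fo fo by move=> X; apply: val_inj; rewrite /= ff_invol.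
pose Ph := fun X : T => Phi m n X.
have Ph_inj : injective Ph.
  by move=> X Y /(Phi_inj hm om hn (ltn_ord X) (ltn_ord Y)) /val_inj.
have cardG : #|{: Zmn m n}| = (m * (2 * n))%N.
  by rewrite card_prod !card_ord !prednK // muln_gt0.
have cardT : (#|{: Zmn m n}| <= #|T|)%N.
  by rewrite cardG card_ord mulnCA.
have [g PhK gK] := inj_card_bij Ph_inj cardT.
pose h := fun x => Ph (fo (g x)).
have h_inj : injective h by move=> x y /Ph_inj/(can_inj foK)/(can_inj gK).
exists (perm h_inj).
have psiE : forall X, perm h_inj (Ph X) = Ph (fo X) by move=> X; rewrite permE /h PhK.
pose X0 : T := Ordinal h2N.
have fX0 : fo X0 = X0 by apply: val_inj.
have e0 : (0 : Zmn m n) = Ph X0 by rewrite /Ph /= Phi0.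
split; last split.
- rewrite /is_Delta_perm.
  set io := ((0 : Zmod m), (inZp n : Zmod (2 * n))).
  pose dl := fun X : T => Ph (fo X) - Ph X.
  have pe1 : perm_eq (enum (Zmn m n : finType)) (map Ph (enum T)).
    apply: uniq_perm; first exact: enum_uniq.
      by rewrite map_inj_uniq ?enum_uniq.
    move=> x; apply/idP/idP => _; last by rewrite mem_enum.
    by apply/mapP; exists (g x); [rewrite mem_enum | rewrite gK].
  apply: (perm_trans (perm_map _ pe1)).
  rewrite -map_comp (@eq_map _ _ _ dl); last by move=> X; rewrite /= psiE.
  have X0in : X0 \in enum T by rewrite mem_enum.
  apply: (perm_trans (perm_map dl (perm_to_rem X0in))).
  have dX0 : dl X0 = 0 by rewrite /dl fX0 subrr.
  rewrite /= dX0 perm_cons.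
  have remE : rem X0 (enum T) = filter (predC1 X0) (enum T) by rewrite rem_filter // enum_uniq.
  have memR : forall X, X \in rem X0 (enum T) -> (0 < X)%N.
    move=> X; rewrite remE mem_filter /= => /andP[hX _]; rewrite lt0n.
    by apply: contra hX => /eqP e; apply/eqP; apply: val_inj.
  have Luniq : uniq (map dl (rem X0 (enum T))).
    rewrite map_inj_in_uniq ?rem_uniq ?enum_uniq //.
    move=> X Y hX hY; rewrite /dl /Ph /= => /Phi_sub [] // H2 H1; apply: val_inj.
    apply: (core_inj hm om hn _ _ H2 H1); apply/andP; split; by [apply: memR | apply: ltn_ord].
  have Lsub : {subset map dl (rem X0 (enum T)) <= [seq g0 <- enum (Zmn m n : finType) | g0 != io]}.
    move=> x /mapP[X hX ->]; rewrite mem_filter mem_enum andbT.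
    apply/eqP; rewrite /io -(Phi_iota hm om hn) /dl /Ph /= => /Phi_sub [] // H2 H1.
    rewrite !addn0 div0n addn0 mulnK // in H2 H1.
    apply: (core_ni hm om hn _ H2 H1); apply/andP; split; by [apply: memR | apply: ltn_ord].
  have Lsize : (size [seq g0 <- enum (Zmn m n : finType) | g0 != io] <= size (map dl (rem X0 (enum T))))%N.
    rewrite size_map size_rem ?mem_enum // size_enum_ord size_filter.
    have := count_predC (pred1 io) (enum (Zmn m n : finType)).
    rewrite count_uniq_mem ?enum_uniq // mem_enum -cardE cardG => e.
    have -> : count (fun g0 => g0 != io) (enum (Zmn m n : finType)) = count (predC (pred1 io)) (enum (Zmn m n : finType)) by [].
    move: e; rewrite (_ : (io \in _) = true) //; clear; lia.
  have [_ Leq] := uniq_min_size Luniq Lsub Lsize.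
  by apply: uniq_perm => //; apply: filter_uniq; apply: enum_uniq.
- by rewrite e0 psiE fX0.
- move=> /=.
  have hC : ((m * n).+1 %/ 2 < 2 * (m * n))%N by clear -hN; lia.
  pose XC : T := Ordinal hC.
  have eC := Phi_c hm om hn; rewrite -eC.
  have -> : Phi m n ((m * n).+1 %/ 2) = Ph XC by [].
  rewrite psiE; congr Ph; apply: val_inj; exact: ffC.
Qed.
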